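(* Let $r>4$, $\Omega=[-r,r]$, and let $K:\mathbb{R}\to[0,\infty)$ be bounded, even, nonincreasing on $(0,\infty)$, with ${\rm supp}(K)=[-2,2]$ and $\int_{\mathbb{R}}K\ge2$. Let $$B_1=\{u\in L^2(\Omega):\ u(x)=1\text{ for }x>1,\ u(x)=-1\text{ for }x<-1,\ u\text{ odd and nondecreasing}\}.$$ Then the map $u\mapsto f(Tu)$ sends $B_1$ into $B_1$.
   Context: $f$ is the saturation function $f(x)=1$ for $x>1$, $f(x)=x$ for $x\in[-1,1]$, $f(x)=-1$ for $x<-1$. For $u\in L^2(\Omega)$, $Tu(x)=\int_{\mathbb{R}}K(x-y)\widetilde u(y)\,dy$ for $x\in\Omega$, where $\widetilde u$ is the extension of $u$ by $0$ outside $\Omega$. *)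

(* Defs.v *)
From Stdlib Require Import Reals Lra.
Open Scope R_scope.

Definition sat (x : R) : R := Rmax (-1) (Rmin 1 x).

Definition RInt_eq (g : R -> R) (a b v : R) : Prop :=
  exists pr : Riemann_integrable g a b, RiemannInt pr = v.

(* u in B_1 (Omega = [-r,r]); u is a pointwise representative on Omega *)
Definition inB1 (r : R) (u : R -> R) : Prop :=
  (forall x, 1 < x <= r -> u x = 1) /\
  (forall x, -r <= x < -1 -> u x = -1) /\
  (forall x, -r <= x <= r -> u (- x) = - u x) /\
  (forall x y, -r <= x -> x <= y -> y <= r -> u x <= u y).

(* Tu(x) = int_R K(x-y) u~(y) dy = int_{-r}^{r} K(x-y) u(y) dy  for x in Omega *)
Definition IsT (K : R -> R) (r : R) (u Tu : R -> R) : Prop :=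
  forall x, -r <= x <= r -> RInt_eq (fun y => K (x - y) * u y) (- r) r (Tu x).

Definition kernel_hyp (K : R -> R) : Prop :=
  (forall x, 0 <= K x) /\
  (exists M, forall x, K x <= M) /\
  (forall x, K (- x) = K x) /\
  (forall x y, 0 < x -> x <= y -> K y <= K x) /\
  (forall x, adherence (fun y => K y <> 0) x <-> -2 <= x <= 2) /\
  (exists v, RInt_eq K (-2) 2 v /\ v >= 2).

(* Main.v *)
Require Import Defs.
From Stdlib Require Import Reals Lra Lia ClassicalEpsilon RList RiemannInt_SF RiemannInt.
Open Scope R_scope.

Lemma adapted_ext (f g : R -> R) a b l lf :
  adapted_couple f a b l lf ->
  (forall x, Rmin a b < x < Rmax a b -> f x = g x) -> adapted_couple g a b l lf.
Proof.
  intros (Ho & H0 & H1 & Hl & Hc) He.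
  repeat split; auto.
  intros i Hi x Hx.
  assert (HP := proj1 (RList_P6 l) Ho).
  unfold open_interval in Hx.
  assert (A1 : pos_Rl l 0 <= pos_Rl l i) by (apply HP; lia).
  assert (A2 : pos_Rl l (S i) <= pos_Rl l (pred (length l))) by (apply HP; lia).
  rewrite <- He.
  - apply Hc; auto.
  - rewrite <- H0, <- H1; lra.
Qed.

Definition SF_ext {a b} (f : StepFun a b) (g : R -> R)
  (H : forall x, Rmin a b < x < Rmax a b -> f x = g x) : IsStepFun g a b :=
  match pre f as p return (adapted_couple f a b (projT1 p) (projT1 (projT2 p)) -> IsStepFun g a b) with
  | existT _ l (existT _ lf p) => fun q => existT _ l (existT _ lf (adapted_ext _ _ _ _ _ _ q H))
  end (projT2 (projT2 (pre f))).

Lemma SF_ext_int {a b} (f : StepFun a b) g H :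
  RiemannInt_SF (mkStepFun (SF_ext f g H)) = RiemannInt_SF f.
Proof.
  destruct f as [fe [l [lf p]]]. reflexivity.
Qed.

Definition Approx (h : R -> R) (a b e : R) : Prop :=
  exists (phi psi : StepFun a b),
    (forall t, a <= t <= b -> Rabs (h t - phi t) <= psi t) /\
    Rabs (RiemannInt_SF psi) <= e.

Definition gl (c : R) (f1 f2 : R -> R) (t : R) : R :=
  if Rle_dec t c then f1 t else f2 t.

Lemma gl_SF1 {a c e} (f1 : StepFun a c) (f2 : StepFun c e) :
  a <= c -> IsStepFun (gl c f1 f2) a c.
Proof.
  intro Hac. apply (SF_ext f1). intros x Hx.
  rewrite Rmin_left, Rmax_right in Hx by lra.
  unfold gl. destruct (Rle_dec x c); [reflexivity | lra].
Defined.

Lemma gl_SF2 {a c e} (f1 : StepFun a c) (f2 : StepFun c e) :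
  c <= e -> IsStepFun (gl c f1 f2) c e.
Proof.
  intro Hce. apply (SF_ext f2). intros x Hx.
  rewrite Rmin_left, Rmax_right in Hx by lra.
  unfold gl. destruct (Rle_dec x c); [lra | reflexivity].
Defined.

Lemma Approx_glue h a c e e1 e2 :
  a <= c -> c <= e -> Approx h a c e1 -> Approx h c e e2 -> Approx h a e (e1 + e2).
Proof.
  intros Hac Hce [p1 [s1 [B1 I1]]] [p2 [s2 [B2 I2]]].
  set (P1 := gl_SF1 p1 p2 Hac). set (P2 := gl_SF2 p1 p2 Hce).
  set (Q1 := gl_SF1 s1 s2 Hac). set (Q2 := gl_SF2 s1 s2 Hce).
  exists (mkStepFun (StepFun_P46 P1 P2)), (mkStepFun (StepFun_P46 Q1 Q2)).
  split.
  - intros t Ht. simpl. unfold gl. destruct (Rle_dec t c).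
    + apply B1; lra.
    + apply B2; lra.
  - rewrite <- (StepFun_P43 Q1 Q2).
    assert (E1 : RiemannInt_SF (mkStepFun Q1) = RiemannInt_SF s1) by apply SF_ext_int.
    assert (E2 : RiemannInt_SF (mkStepFun Q2) = RiemannInt_SF s2) by apply SF_ext_int.
    rewrite E1, E2.
    eapply Rle_trans; [apply Rabs_triang|]. lra.
Qed.

Lemma Approx_piece h c d D :
  c <= d -> (forall t, c <= t <= d -> Rabs (h t - h c) <= D) ->
  Approx h c d ((d - c) * D).
Proof.
  intros Hcd HD.
  assert (D0 : 0 <= D) by (eapply Rle_trans; [apply Rabs_pos | apply (HD c); lra]).
  exists (mkStepFun (StepFun_P4 c d (h c))), (mkStepFun (StepFun_P4 c d D)).
  split.
  - intros t Ht. simpl. unfold fct_cte. apply HD; auto.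
  - rewrite StepFun_P18. rewrite Rabs_right; [lra|].
    apply Rle_ge. apply Rmult_le_pos; lra.
Qed.

Lemma Approx_steps h V a b d :
  0 <= d ->
  (forall p s q, a <= p -> p <= s -> s <= q -> q <= b -> Rabs (h s - h p) <= V q - V p) ->
  forall n : nat, a + INR n * d <= b -> Approx h a (a + INR n * d) (d * (V (a + INR n * d) - V a)).
Proof.
  intros Hd Hdom. induction n as [|n IH]; intros Hn.
  - simpl. replace (a + 0 * d) with a by ring.
    replace (d * (V a - V a)) with ((a - a) * 0) by ring.
    apply Approx_piece; [lra|]. intros t Ht. replace t with a by lra.
    rewrite Rminus_diag, Rabs_R0; lra.
  - rewrite S_INR in *.
    assert (Hn0 : 0 <= INR n) by apply pos_INR.
    assert (Hnd : 0 <= INR n * d) by (apply Rmult_le_pos; lra).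
    replace (a + (INR n + 1) * d) with ((a + INR n * d) + d) in * by ring.
    replace (d * (V (a + INR n * d + d) - V a)) with
      (d * (V (a + INR n * d) - V a) + ((a + INR n * d + d) - (a + INR n * d)) *
         (V (a + INR n * d + d) - V (a + INR n * d))) by ring.
    apply (Approx_glue _ _ (a + INR n * d)); try lra.
    + apply IH; lra.
    + apply Approx_piece; [lra|]. intros t Ht. apply Hdom; lra.
Qed.

Lemma dom_integrable h V a b :
  a <= b ->
  (forall p s q, a <= p -> p <= s -> s <= q -> q <= b -> Rabs (h s - h p) <= V q - V p) ->
  Riemann_integrable h a b.
Proof.
  intros Hab Hdom eps.
  assert (HV : 0 <= V b - V a).
  { eapply Rle_trans; [apply Rabs_pos | apply (Hdom a a b); lra]. }
  destruct (constructive_indefinite_description _ (INR_archimed eps ((b - a) * (V b - V a)) (cond_pos eps))) as [n Hn].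
  set (N := S n).
  assert (HN : 0 < INR N) by (apply lt_0_INR; unfold N; lia).
  assert (HN2 : INR N * eps > (b - a) * (V b - V a)).
  { unfold N. rewrite S_INR. pose proof (cond_pos eps). lra. }
  set (d := (b - a) / INR N).
  assert (Hd : 0 <= d) by (unfold d; apply Rmult_le_pos; [lra | left; apply Rinv_0_lt_compat; lra]).
  assert (Hb : a + INR N * d = b) by (unfold d; field; lra).
  assert (HA := Approx_steps h V a b d Hd Hdom N (Req_le _ _ Hb)).
  rewrite Hb in HA.
  assert (Hlt : d * (V b - V a) < eps).
  { unfold d. apply (Rmult_lt_reg_l (INR N)); auto.
    replace (INR N * ((b - a) / INR N * (V b - V a))) with ((b - a) * (V b - V a)) by (field; lra).
    lra. }
  apply constructive_indefinite_description in HA. destruct HA as [phi HA].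
  apply constructive_indefinite_description in HA. destruct HA as [psi [HB HI]].
  exists phi, psi. split.
  - rewrite Rmin_left, Rmax_right by lra. auto.
  - lra.
Qed.

From Coquelicot Require Import Coquelicot.
Open Scope R_scope.

Lemma dom_bound (A B C us up uq M : R) :
  0 <= A <= M -> C <= A <= B -> up <= us <= uq -> -1 <= up <= 1 ->
  Rabs (A * us - B * up) <= M * uq - C - (M * up - B).
Proof.
  intros. apply Rabs_le. split; nra.
Qed.

Lemma dom_bound2 (A B C us up uq M : R) :
  0 <= A <= M -> B <= A <= C -> up <= us <= uq -> -1 <= up <= 1 ->
  Rabs (A * us - B * up) <= M * uq + C - (M * up + B).
Proof.
  intros. apply Rabs_le. split; nra.
Qed.

Lemma g_integrable (K u : R -> R) (M r x : R) :
  (forall t, 0 <= K t) -> (forall t, K t <= M) -> (forall t, K (- t) = K t) ->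
  (forall s t, 0 < s -> s <= t -> K t <= K s) ->
  (forall y, -r <= y <= r -> -1 <= u y <= 1) ->
  (forall s t, -r <= s -> s <= t -> t <= r -> u s <= u t) ->
  -r <= x <= r ->
  ex_RInt (fun y => K (x - y) * u y) (- r) r.
Proof.
  intros Kp KM Ke Km ub um Hx.
  set (Kt := fun t => if Rle_dec t 0 then M else K t).
  assert (Ktp : forall t, 0 <= Kt t <= M).
  { intro t; unfold Kt; destruct (Rle_dec t 0);
      [split; [apply Rle_trans with (K 0); auto | lra] | split; auto]. }
  assert (Ktm : forall s t, 0 <= s -> s <= t -> Kt t <= Kt s).
  { intros s t Hs Hst; unfold Kt.
    destruct (Rle_dec t 0); destruct (Rle_dec s 0); try lra; auto.
    apply Km; lra. }
  apply ex_RInt_Chasles with x.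
  - apply ex_RInt_ext with (fun y => Kt (x - y) * u y).
    + intros y Hy. rewrite Rmin_left, Rmax_right in Hy by lra.
      unfold Kt. destruct (Rle_dec (x - y) 0); [lra | reflexivity].
    + apply ex_RInt_Reals_1.
      apply (dom_integrable _ (fun y => M * u y + Kt (x - y))); [lra|].
      intros p s q Hp Hps Hsq Hq.
      apply dom_bound2.
      * apply Ktp.
      * split; apply Ktm; lra.
      * split; apply um; lra.
      * apply ub; lra.
  - apply ex_RInt_ext with (fun y => Kt (y - x) * u y).
    + intros y Hy. rewrite Rmin_left, Rmax_right in Hy by lra.
      unfold Kt. destruct (Rle_dec (y - x) 0); [lra |].
      replace (x - y) with (- (y - x)) by ring. rewrite Ke. reflexivity.
    + apply ex_RInt_Reals_1.
      apply (dom_integrable _ (fun y => M * u y - Kt (y - x))); [lra|].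
      intros p s q Hp Hps Hsq Hq.
      apply dom_bound.
      * apply Ktp.
      * split; apply Ktm; lra.
      * split; apply um; lra.
      * apply ub; lra.
Qed.


Lemma ex_Ch1 (f : R -> R) a b c : a <= b <= c -> ex_RInt f a c -> ex_RInt f a b.
Proof. intros H1 H2. exact (ex_RInt_Chasles_1 f a b c H1 H2). Qed.
Lemma ex_Ch2 (f : R -> R) a b c : a <= b <= c -> ex_RInt f a c -> ex_RInt f b c.
Proof. intros H1 H2. exact (ex_RInt_Chasles_2 f a b c H1 H2). Qed.

Lemma RInt_oppR (g : R -> R) a b : ex_RInt g a b -> RInt (fun y => - g y) a b = - RInt g a b.
Proof. intro H. exact (RInt_opp g a b H). Qed.
Lemma ex_RInt_oppR (g : R -> R) a b : ex_RInt g a b -> ex_RInt (fun y => - g y) a b.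
Proof. intro H. exact (ex_RInt_opp g a b H). Qed.
Lemma RInt_plusR (f g : R -> R) a b : ex_RInt f a b -> ex_RInt g a b ->
  RInt (fun y => f y + g y) a b = RInt f a b + RInt g a b.
Proof. intros H1 H2. exact (RInt_plus f g a b H1 H2). Qed.
Lemma ex_RInt_plusR (f g : R -> R) a b : ex_RInt f a b -> ex_RInt g a b ->
  ex_RInt (fun y => f y + g y) a b.
Proof. intros H1 H2. exact (ex_RInt_plus f g a b H1 H2). Qed.
Lemma RInt_linR (f : R -> R) u v a b : ex_RInt f (u*a+v) (u*b+v) ->
  RInt (fun y => u * f (u*y+v)) a b = RInt f (u*a+v) (u*b+v).
Proof. intro H. exact (RInt_comp_lin f u v a b H). Qed.
Lemma ex_RInt_linR (f : R -> R) u v a b : ex_RInt f (u*a+v) (u*b+v) ->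
  ex_RInt (fun y => u * f (u*y+v)) a b.
Proof. intro H. exact (ex_RInt_comp_lin f u v a b H). Qed.
Lemma RInt_swapR (f : R -> R) a b : ex_RInt f a b -> RInt f b a = - RInt f a b.
Proof. intro H. rewrite <- (opp_RInt_swap f a b H). reflexivity. Qed.
Lemma RInt_constR a b (c : R) : RInt (fun _ => c) a b = (b - a) * c.
Proof. exact (RInt_const a b c). Qed.

Lemma Ch (f : R -> R) a b c : ex_RInt f a b -> ex_RInt f b c -> RInt f a c = RInt f a b + RInt f b c.
Proof. intros H1 H2. rewrite <- (RInt_Chasles f a b c H1 H2). reflexivity. Qed.

Lemma RInt_refl (f : R -> R) v a b : ex_RInt f a b ->
  ex_RInt (fun y => f (v - y)) (v - b) (v - a) /\ RInt f a b = RInt (fun y => f (v - y)) (v - b) (v - a).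
Proof.
  intro H.
  assert (H' : ex_RInt f (-1*(v-a)+v) (-1*(v-b)+v)).
  { replace (-1*(v-a)+v) with a by ring. replace (-1*(v-b)+v) with b by ring. exact H. }
  pose proof (ex_RInt_linR f (-1) v (v-a) (v-b) H') as E1.
  pose proof (RInt_linR f (-1) v (v-a) (v-b) H') as E2.
  replace (-1*(v-a)+v) with a in E2 by ring. replace (-1*(v-b)+v) with b in E2 by ring.
  assert (Eq : forall y, - (-1 * f (-1*y+v)) = f (v - y)).
  { intro y. replace (-1 * y + v) with (v - y) by ring. ring. }
  assert (E3 : ex_RInt (fun y => f (v-y)) (v-a) (v-b)).
  { apply ex_RInt_ext with (fun y => - (-1 * f (-1*y+v))).
    - intros; apply Eq.
    - exact (ex_RInt_oppR _ _ _ E1). }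
  split.
  - apply ex_RInt_swap; auto.
  - rewrite (RInt_swapR _ _ _ E3).
    rewrite (RInt_ext (fun y => f (v-y)) (fun y => - (-1 * f (-1*y+v))) (v-a) (v-b))
      by (intros; symmetry; apply Eq).
    rewrite (RInt_oppR _ (v-a) (v-b) E1). rewrite E2. symmetry; apply Ropp_involutive.
Qed.

Lemma RInt_shift (f : R -> R) c a b : ex_RInt f a b ->
  ex_RInt (fun y => f (y + c)) (a - c) (b - c) /\ RInt f a b = RInt (fun y => f (y + c)) (a - c) (b - c).
Proof.
  intro H.
  assert (H' : ex_RInt f (1*(a-c)+c) (1*(b-c)+c)).
  { replace (1*(a-c)+c) with a by ring. replace (1*(b-c)+c) with b by ring. exact H. }
  pose proof (ex_RInt_linR f 1 c (a-c) (b-c) H') as E1.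
  pose proof (RInt_linR f 1 c (a-c) (b-c) H') as E2.
  replace (1*(a-c)+c) with a in E2 by ring. replace (1*(b-c)+c) with b in E2 by ring.
  assert (Eq : forall y, 1 * f (1*y+c) = f (y + c)).
  { intro y. replace (1 * y + c) with (y + c) by ring. ring. }
  split.
  - apply ex_RInt_ext with (2 := E1). intros; apply Eq.
  - rewrite <- E2. apply RInt_ext. intros; apply Eq.
Qed.

Definition KH (K : R -> R) : Prop :=
  (forall t, 0 <= K t) /\ (forall t, K (- t) = K t) /\
  (forall s t, 0 < s -> s <= t -> K t <= K s) /\
  (forall t, 2 < Rabs t -> K t = 0) /\ ex_RInt K (-2) 2 /\ 2 <= RInt K (-2) 2.

Lemma KH_int K : KH K -> forall a b, ex_RInt K a b.
Proof.
  intros (Kp & Ke & Km & Kz & Ki & Kv).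
  assert (G : forall a b, a <= -2 -> 2 <= b -> ex_RInt K a b).
  { intros a b Ha Hb. apply ex_RInt_Chasles with (-2).
    - apply ex_RInt_ext with (fun _ => 0); [|apply ex_RInt_const].
      intros x Hx. rewrite Rmin_left, Rmax_right in Hx by lra.
      symmetry; apply Kz. rewrite Rabs_left; lra.
    - apply ex_RInt_Chasles with 2; auto.
      apply ex_RInt_ext with (fun _ => 0); [|apply ex_RInt_const].
      intros x Hx. rewrite Rmin_left, Rmax_right in Hx by lra.
      symmetry; apply Kz. rewrite Rabs_right; lra. }
  assert (G2 : forall a b, a <= b -> ex_RInt K a b).
  { intros a b Hab. set (L := Rabs a + Rabs b + 2).
    assert (A1 := Rle_abs a). assert (A2 := Rle_abs b).
    assert (A3 := Rle_abs (-a)). assert (A4 := Rle_abs (-b)).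
    rewrite Rabs_Ropp in A3, A4.
    assert (HL : ex_RInt K (-L) L) by (apply G; unfold L; lra).
    apply ex_Ch2 with (-L); [unfold L; lra|].
    apply ex_Ch1 with L; [unfold L; lra|]. exact HL. }
  intros a b. destruct (Rle_dec a b).
  - apply G2; auto.
  - apply ex_RInt_swap, G2; lra.
Qed.

Lemma KH_sub K : KH K -> forall m a b n, m <= a -> a <= b -> b <= n -> RInt K a b <= RInt K m n.
Proof.
  intros HK m a b n H1 H2 H3.
  assert (I := KH_int K HK). destruct HK as (Kp & _).
  rewrite (Ch K m a n), (Ch K a b n); auto.
  assert (0 <= RInt K m a) by (apply RInt_ge_0; auto).
  assert (0 <= RInt K b n) by (apply RInt_ge_0; auto).
  lra.
Qed.

Lemma KH_half K : KH K -> 1 <= RInt K (-2) 0 /\ 1 <= RInt K 0 2.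
Proof.
  intros HK. assert (I := KH_int K HK). destruct HK as (Kp & Ke & Km & Kz & Ki & Kv).
  rewrite (Ch K (-2) 0 2) in Kv; auto.
  destruct (RInt_refl K 0 (-2) 0 (I _ _)) as [_ E].
  replace (0 - 0) with 0 in E by ring. replace (0 - -2) with 2 in E by ring.
  rewrite (RInt_ext (fun y => K (0 - y)) K 0 2) in E.
  - lra.
  - intros; replace (0 - x) with (- x) by ring; apply Ke.
Qed.

Lemma KH_mid K : KH K -> 1 <= RInt K (-1) 1.
Proof.
  intros HK. assert (I := KH_int K HK). assert (HK' := HK).
  destruct HK as (Kp & Ke & Km & Kz & Ki & Kv).
  rewrite (Ch K (-2) (-1) 2), (Ch K (-1) 1 2), (Ch K (-1) 0 1) in Kv; auto.
  rewrite (Ch K (-1) 0 1); auto.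
  assert (A : RInt K 1 2 <= RInt K 0 1).
  { destruct (RInt_shift K 1 1 2 (I _ _)) as [E0 E].
    replace (1 - 1) with 0 in E, E0 by ring. replace (2 - 1) with 1 in E, E0 by ring.
    rewrite E. apply RInt_le; auto; [lra|].
    intros x Hx. apply Km; lra. }
  assert (B : RInt K (-2) (-1) <= RInt K (-1) 0).
  { destruct (RInt_shift K (-1) (-2) (-1) (I _ _)) as [E0 E].
    replace (-2 - -1) with (-1) in E, E0 by ring. replace (-1 - -1) with 0 in E, E0 by ring.
    rewrite E. apply RInt_le; auto; [lra|].
    intros x Hx. rewrite <- (Ke (x + -1)), <- (Ke x). apply Km; lra. }
  lra.
Qed.

Lemma KH_big K : KH K -> forall m n, m <= 0 -> 0 <= n -> 3 <= n - m -> 1 <= RInt K m n.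
Proof.
  intros HK m n Hm Hn Hmn.
  destruct (KH_half K HK) as [H1 H2]. assert (H3 := KH_mid K HK).
  destruct (Rle_dec m (-2)).
  - eapply Rle_trans; [apply H1 | apply (KH_sub K HK); lra].
  - destruct (Rle_dec 2 n).
    + eapply Rle_trans; [apply H2 | apply (KH_sub K HK); lra].
    + eapply Rle_trans; [apply H3 | apply (KH_sub K HK); lra].
Qed.


Definition uH (r : R) (u : R -> R) : Prop :=
  (forall x, 1 < x <= r -> u x = 1) /\
  (forall x, -r <= x < -1 -> u x = -1) /\
  (forall x, -r <= x <= r -> u (- x) = - u x) /\
  (forall x y, -r <= x -> x <= y -> y <= r -> u x <= u y).

Lemma Tu_odd K u r x : KH K -> uH r u -> 
  (forall x, -r <= x <= r -> ex_RInt (fun y => K (x - y) * u y) (- r) r) ->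
  -r <= x <= r ->
  RInt (fun y => K (- x - y) * u y) (- r) r = - RInt (fun y => K (x - y) * u y) (- r) r.
Proof.
  intros HK Hu Gi Hx.
  destruct HK as (Kp & Ke & Km & Kz & Ki & Kv).
  destruct Hu as (U1 & U2 & U3 & U4).
  destruct (RInt_refl _ 0 (-r) r (Gi x Hx)) as [_ E].
  replace (0 - r) with (-r) in E by ring. replace (0 - - r) with r in E by ring.
  rewrite E.
  rewrite (RInt_ext (fun y => K (x - (0 - y)) * u (0 - y)) (fun y => - (K (- x - y) * u y)) (-r) r).
  - rewrite (RInt_oppR _ _ _ (Gi (-x) ltac:(lra))). symmetry; apply Ropp_involutive.
  - intros y Hy. rewrite Rmin_left, Rmax_right in Hy by lra.
    assert (P : K (x - (0 - y)) * u (0 - y) = - (K (- x - y) * u y)).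
    { replace (0 - y) with (- y) by ring. rewrite U3 by lra.
      replace (x - - y) with (- (- x - y)) by ring. rewrite Ke. ring. }
    exact P.
Qed.

Lemma Tu_rep K u r x : -r <= x <= r -> ex_RInt (fun y => K (x - y) * u y) (- r) r ->
  ex_RInt (fun t => K t * u (x - t)) (x - r) (x + r) /\
  RInt (fun y => K (x - y) * u y) (- r) r = RInt (fun t => K t * u (x - t)) (x - r) (x + r).
Proof.
  intros Hx Gi.
  destruct (RInt_refl _ x (-r) r Gi) as [E0 E].
  replace (x - - r) with (x + r) in E, E0 by ring.
  split.
  - apply ex_RInt_ext with (2 := E0). intros t _. replace (x - (x - t)) with t by ring. reflexivity.
  - rewrite E. apply RInt_ext. intros t _. replace (x - (x - t)) with t by ring. reflexivity.
Qed.

Lemma Tu_cut K u r x : KH K -> r > 4 -> -1 <= x <= 1 ->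
  ex_RInt (fun t => K t * u (x - t)) (x - r) (x + r) ->
  RInt (fun t => K t * u (x - t)) (x - r) (x + r) = RInt (fun t => K t * u (x - t)) (-3) 3.
Proof.
  intros HK Hr Hx Fi.
  destruct HK as (Kp & Ke & Km & Kz & Ki & Kv).
  set (F := fun t => K t * u (x - t)).
  assert (I1 : ex_RInt F (x - r) (-3)) by (apply ex_Ch1 with (x + r); auto; lra).
  assert (I2 : ex_RInt F (-3) (x + r)) by (apply ex_Ch2 with (x - r); auto; lra).
  assert (I3 : ex_RInt F (-3) 3) by (apply ex_Ch1 with (x + r); auto; lra).
  assert (I4 : ex_RInt F 3 (x + r)) by (apply ex_Ch2 with (-3); auto; lra).
  rewrite (Ch F (x - r) (-3) (x + r) I1 I2), (Ch F (-3) 3 (x + r) I3 I4).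
  rewrite (RInt_ext F (fun _ => 0) (x - r) (-3)).
  2:{ intros t Ht. rewrite Rmin_left, Rmax_right in Ht by lra. unfold F.
      assert (P : K t * u (x - t) = 0) by (rewrite Kz; [ring | rewrite Rabs_left; lra]). exact P. }
  rewrite (RInt_ext F (fun _ => 0) 3 (x + r)).
  2:{ intros t Ht. rewrite Rmin_left, Rmax_right in Ht by lra. unfold F.
      assert (P : K t * u (x - t) = 0) by (rewrite Kz; [ring | rewrite Rabs_right; lra]). exact P. }
  rewrite !RInt_constR, !Rmult_0_r, Rplus_0_l, Rplus_0_r. reflexivity.
Qed.

Lemma Tu_mono K u r x z : KH K -> uH r u -> r > 4 ->
  (forall x, -r <= x <= r -> ex_RInt (fun y => K (x - y) * u y) (- r) r) ->
  -1 <= x -> x <= z -> z <= 1 ->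
  RInt (fun y => K (x - y) * u y) (- r) r <= RInt (fun y => K (z - y) * u y) (- r) r.
Proof.
  intros HK Hu Hr Gi H1 H2 H3.
  destruct (Tu_rep K u r x ltac:(lra) (Gi x ltac:(lra))) as [Fx Ex].
  destruct (Tu_rep K u r z ltac:(lra) (Gi z ltac:(lra))) as [Fz Ez].
  rewrite Ex, Ez, (Tu_cut K u r x HK Hr ltac:(lra) Fx), (Tu_cut K u r z HK Hr ltac:(lra) Fz).
  destruct HK as (Kp & Ke & Km & Kz & Ki & Kv).
  destruct Hu as (U1 & U2 & U3 & U4).
  apply RInt_le; [lra | apply ex_Ch2 with (x - r); [lra|]; apply ex_Ch1 with (x + r); [lra|]; auto
                 | apply ex_Ch2 with (z - r); [lra|]; apply ex_Ch1 with (z + r); [lra|]; auto |].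
  intros t Ht. apply Rmult_le_compat_l; auto. apply U4; lra.
Qed.

Lemma Tu_ge1 K u r x : KH K -> uH r u -> r > 4 ->
  (forall x, -r <= x <= r -> ex_RInt (fun y => K (x - y) * u y) (- r) r) ->
  1 < x <= r -> 1 <= RInt (fun y => K (x - y) * u y) (- r) r.
Proof.
  intros HK Hu Hr Gi Hx.
  assert (KI := KH_int K HK). assert (KB := KH_big K HK).
  destruct HK as (Kp & Ke & Km & Kz & Ki & Kv).
  destruct Hu as (U1 & U2 & U3 & U4).
  set (G := fun y => K (x - y) * u y).
  assert (GI : ex_RInt G (-r) r) by (apply Gi; lra).
  assert (I1 : ex_RInt G (-r) (-1)) by (apply ex_Ch1 with r; auto; lra).
  assert (I2 : ex_RInt G (-1) r) by (apply ex_Ch2 with (-r); auto; lra).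
  assert (I3 : ex_RInt G (-1) 1) by (apply ex_Ch1 with r; auto; lra).
  assert (I4 : ex_RInt G 1 r) by (apply ex_Ch2 with (-1); auto; lra).
  assert (I5 : ex_RInt G (-1) 0) by (apply ex_Ch1 with 1; auto; lra).
  assert (I6 : ex_RInt G 0 1) by (apply ex_Ch2 with (-1); auto; lra).
  change (1 <= RInt G (-r) r).
  rewrite (Ch G (-r) (-1) r I1 I2), (Ch G (-1) 1 r I3 I4), (Ch G (-1) 0 1 I5 I6).
  rewrite (RInt_ext G (fun _ => 0) (-r) (-1)).
  2:{ intros t Ht. rewrite Rmin_left, Rmax_right in Ht by lra. unfold G.
      assert (P : K (x - t) * u t = 0) by (rewrite Kz; [ring | rewrite Rabs_right; lra]). exact P. }
  rewrite RInt_constR.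
  assert (A : 1 <= RInt G 1 r).
  { rewrite (RInt_ext G (fun y => K (x - y)) 1 r).
    2:{ intros t Ht. rewrite Rmin_left, Rmax_right in Ht by lra. unfold G.
        assert (P : K (x - t) * u t = K (x - t)) by (rewrite U1; [ring | lra]). exact P. }
    destruct (RInt_refl K x (x - r) (x - 1) (KI _ _)) as [_ E].
    replace (x - (x - 1)) with 1 in E by ring. replace (x - (x - r)) with r in E by ring.
    rewrite <- E. apply KB; lra. }
  assert (B : 0 <= RInt G (-1) 0 + RInt G 0 1).
  { destruct (RInt_refl G 0 (-1) 0 I5) as [E0 E].
    replace (0 - 0) with 0 in E, E0 by ring. replace (0 - -1) with 1 in E, E0 by ring.
    rewrite E, <- (RInt_plusR _ _ _ _ E0 I6).
    apply RInt_ge_0; [lra | apply ex_RInt_plusR; auto |].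
    intros y Hy. unfold G.
    assert (u0 : u 0 = 0).
    { pose proof (U3 0 ltac:(lra)) as Q. rewrite Ropp_0 in Q. lra. }
    assert (uy : 0 <= u y) by (rewrite <- u0; apply U4; lra).
    assert (Km' : K (x + y) <= K (x - y)) by (apply Km; lra).
    replace (x - (0 - y)) with (x + y) by ring. replace (0 - y) with (- y) by ring.
    rewrite U3 by lra. nra. }
  lra.
Qed.

Lemma sat_mono a b : a <= b -> sat a <= sat b.
Proof. unfold sat, Rmax, Rmin. intros; repeat destruct Rle_dec; lra. Qed.
Lemma sat_odd a : sat (- a) = - sat a.
Proof. unfold sat, Rmax, Rmin. repeat destruct Rle_dec; lra. Qed.
Lemma sat_hi a : 1 <= a -> sat a = 1.
Proof. unfold sat, Rmax, Rmin. intros; repeat destruct Rle_dec; lra. Qed.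
Lemma sat_lo a : a <= -1 -> sat a = -1.
Proof. unfold sat, Rmax, Rmin. intros; repeat destruct Rle_dec; lra. Qed.
Lemma sat_bd a : -1 <= sat a <= 1.
Proof. unfold sat, Rmax, Rmin. repeat destruct Rle_dec; lra. Qed.

Theorem mainTheorem10 (r : R) (K : R -> R) :
  r > 4 -> kernel_hyp K ->
  forall u : R -> R, inB1 r u ->
    exists Tu : R -> R, IsT K r u Tu /\ inB1 r (fun x => sat (Tu x)).
Proof.
  intros Hr HK u Hu.
  destruct HK as (Kp & [M KM] & Ke & Km & Kadh & [v [[pr Hpr] Hv]]).
  assert (Kz : forall t, 2 < Rabs t -> K t = 0).
  { intros t Ht. destruct (Req_dec (K t) 0) as [E|E]; auto.
    assert (Ad : adherence (fun y => K y <> 0) t) by (apply adherence_P1; exact E).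
    apply Kadh in Ad. unfold Rabs in Ht. destruct Rcase_abs in Ht; lra. }
  assert (HK : KH K).
  { repeat split; auto.
    - exact (ex_RInt_Reals_1 _ _ _ pr).
    - rewrite (RInt_Reals _ _ _ pr), Hpr. lra. }
  assert (Hu' := Hu). destruct Hu as (U1 & U2 & U3 & U4).
  assert (ub : forall y, -r <= y <= r -> -1 <= u y <= 1).
  { intros y Hy. split.
    - rewrite <- (U2 (-r)) by lra. apply U4; lra.
    - rewrite <- (U1 r) by lra. apply U4; lra. }
  assert (Gi : forall x, -r <= x <= r -> ex_RInt (fun y => K (x - y) * u y) (- r) r).
  { intros x Hx. apply (g_integrable K u M r x); auto. }
  set (Tu := fun x => RInt (fun y => K (x - y) * u y) (- r) r).
  exists Tu. split.
  - intros x Hx. exists (ex_RInt_Reals_0 _ _ _ (Gi x Hx)).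
    unfold Tu. rewrite (RInt_Reals _ _ _ (ex_RInt_Reals_0 _ _ _ (Gi x Hx))). reflexivity.
  - assert (G1 : forall x, 1 < x <= r -> 1 <= Tu x).
    { intros x Hx. apply (Tu_ge1 K u r x HK Hu' Hr Gi Hx). }
    assert (Od : forall x, -r <= x <= r -> Tu (- x) = - Tu x).
    { intros x Hx. apply (Tu_odd K u r x HK Hu' Gi Hx). }
    assert (G2 : forall x, -r <= x < -1 -> Tu x <= -1).
    { intros x Hx. replace x with (- - x) by ring. rewrite Od by lra.
      assert (1 <= Tu (- x)) by (apply G1; lra). lra. }
    repeat split.
    + intros x Hx. apply sat_hi, G1; auto.
    + intros x Hx. apply sat_lo, G2; auto.
    + intros x Hx. simpl. rewrite Od by auto. apply sat_odd.
    + intros x y Hx Hxy Hy.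
      destruct (Rlt_dec 1 y).
      * rewrite (sat_hi (Tu y)) by (apply G1; lra). apply sat_bd.
      * destruct (Rlt_dec x (-1)).
        -- rewrite (sat_lo (Tu x)) by (apply G2; lra). apply sat_bd.
        -- apply sat_mono. apply (Tu_mono K u r x y HK Hu' Hr Gi); lra.
Qed.
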